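(* Consider the reflected geometric Brownian motion (RGBM) model, in which the bank account is $B_t=\mathrm{e}^{rt}$ with $r\geq 0$ and the stock price $S$ solves $\mathrm{d}S_t=\mu S_t\,\mathrm{d}t+\sigma S_t\,\mathrm{d}W_t+\mathrm{d}L_t$ with lower reflecting boundary $b>0$ (where $L$ is the reflection term). Let the European put price with strike $K\geq b$ and maturity $T$ be given, for $(t,S)\in[0,T]\times[b,\infty)$, by the published RGBM put pricing formula \[ \begin{split} P(t,S)&=K\mathrm{e}^{-r(T-t)}\Phi\bigl(-z_1+\sigma\sqrt{T-t}\bigr)-b\mathrm{e}^{-r(T-t)}\Phi(z_4)-S\bigl(\Phi\bigl(-z_4+\sigma\sqrt{T-t}\bigr)-\Phi(z_1)\bigr)\\ &\quad-\frac{1}{\theta}\Bigl(S\bigl(\tfrac{b}{S}\bigr)^{1+\theta}\bigl(\Phi\bigl(z_4+\theta\sigma\sqrt{T-t}\bigr)-\Phi(z_3)\bigr)-b\mathrm{e}^{-r(T-t)}\Phi(z_4)+K\mathrm{e}^{-r(T-t)}\bigl(\tfrac{K}{b}\bigr)^{\theta-1}\Phi\bigl(z_3-\theta\sigma\sqrt{T-t}\bigr)\Bigr), \end{split} \] where $z_1=\frac{\ln\frac{S}{K}+(r+\frac12\sigma^2)(T-t)}{\sigma\sqrt{T-t}}$, $z_3=\frac{\ln\frac{b^2}{KS}+(r+\frac12\sigma^2)(T-t)}{\sigma\sqrt{T-t}}$, $z_4=\frac{\ln\frac{b}{S}-(r-\frac12\sigma^2)(T-t)}{\sigma\sqrt{T-t}}$,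 $\theta=\frac{2r}{\sigma^2}$, and $\Phi$ is the standard normal cumulative distribution function. Then the put price obtained from this formula violates the model-independent lower bound $P(t,S)\geq K\mathrm{e}^{-r(T-t)}-S$ (which must hold for all $(t,S)\in[0,T]\times[b,\infty)$ whenever an equivalent risk-neutral probability measure exists) under certain parameter regimes, when the stock price is close to the reflecting boundary $b$.
   Context: The lower bound $P(t,S)\geq \mathrm{E}^{\mathbb{Q}}_{t,S}(\mathrm{e}^{-r(T-t)}(K-S_T))\geq K\mathrm{e}^{-r(T-t)}-S$ follows if $\mathbb{Q}$ is an equivalent risk-neutral probability measure, since the discounted stock price is then a nonnegative $\mathbb{Q}$-local martingale and hence a $\mathbb{Q}$-supermartingale. $\Phi$ denotes the standard normal CDF. *)

(* Defs.v *)
From Stdlib Require Import Reals.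
From Coquelicot Require Import Coquelicot.
Open Scope R_scope.

Definition Phi (x : R) : R :=
  RInt_gen (fun u => exp (- u ^ 2 / 2) / sqrt (2 * PI))
           (Rbar_locally m_infty) (at_point x).

Definition rgbm_put (r sigma b K T t S : R) : R :=
  let tau := T - t in
  let st := sigma * sqrt tau in
  let theta := 2 * r / sigma ^ 2 in
  let D := exp (- r * tau) in
  let z1 := (ln (S / K) + (r + sigma ^ 2 / 2) * tau) / st in
  let z3 := (ln (b ^ 2 / (K * S)) + (r + sigma ^ 2 / 2) * tau) / st in
  let z4 := (ln (b / S) - (r - sigma ^ 2 / 2) * tau) / st in
  K * D * Phi (- z1 + st) - b * D * Phi z4
  - S * (Phi (- z4 + st) - Phi z1)
  - / theta * ( S * Rpower (b / S) (1 + theta) * (Phi (z4 + theta * st) - Phi z3)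
               - b * D * Phi z4
               + K * D * Rpower (K / b) (theta - 1) * Phi (z3 - theta * st)).

(* Main.v *)
Require Import Defs.
From Stdlib Require Import Reals Lra.
From Coquelicot Require Import Coquelicot.
Open Scope R_scope.

Lemma exp_mono x y : x <= y -> exp x <= exp y.
Proof. intros H. destruct (Rle_lt_or_eq_dec _ _ H). left; apply exp_increasing; auto. subst; lra. Qed.

Definition gf (u : R) : R := exp (- u ^ 2 / 2) / sqrt (2 * PI).

Lemma sqrt2PI_gt2 : 2 < sqrt (2 * PI).
Proof.
  pose proof PI2_3_2 as HP.
  assert (H4 : sqrt 4 = 2) by (replace 4 with (2*2) by ring; apply sqrt_square; lra).
  rewrite <- H4 at 1.
  apply sqrt_lt_1; lra.
Qed.

Lemma gf_pos u : 0 < gf u.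
Proof.
  unfold gf. pose proof sqrt2PI_gt2. pose proof (exp_pos (- u ^ 2 / 2)).
  apply Rdiv_lt_0_compat; lra.
Qed.

Lemma gf_le u : gf u <= / sqrt (2 * PI).
Proof.
  unfold gf. pose proof sqrt2PI_gt2.
  rewrite <- (Rmult_1_l (/ sqrt _)). unfold Rdiv.
  apply Rmult_le_compat_r. apply Rlt_le, Rinv_0_lt_compat; lra.
  rewrite <- exp_0. apply exp_mono. nra.
Qed.

Lemma gf_le_exp u : gf u <= exp (u + 2).
Proof.
  unfold gf. pose proof sqrt2PI_gt2.
  apply Rle_trans with (exp (- u ^ 2 / 2)).
  - unfold Rdiv. rewrite <- (Rmult_1_r (exp _)) at 2.
    apply Rmult_le_compat_l. apply Rlt_le, exp_pos.
    rewrite <- Rinv_1. apply Rinv_le_contravar; lra.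
  - apply exp_mono. nra.
Qed.

Lemma gf_ex_derive u : ex_derive gf u.
Proof. unfold gf. auto_derive. pose proof sqrt2PI_gt2. lra. Qed.

Lemma gf_cont u : continuous gf u.
Proof. apply (ex_derive_continuous (K:=R_AbsRing) (V:=R_NormedModule)), gf_ex_derive. Qed.

Lemma gf_exRInt a b : ex_RInt gf a b.
Proof. apply (ex_RInt_continuous (V:=R_CompleteNormedModule)). intros; apply gf_cont. Qed.

Lemma gf_even u : gf (- u) = gf u.
Proof. unfold gf. replace ((-u)^2) with (u^2) by ring. reflexivity. Qed.

Lemma expshift_RInt a b : RInt (fun u => exp (u + 2)) a b = exp (b + 2) - exp (a + 2).
Proof.
  assert (H : is_RInt (fun u => exp (u + 2)) a b (minus (exp (b+2)) (exp (a+2)))).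
  { apply (is_RInt_derive (V:=R_CompleteNormedModule) (fun u => exp (u + 2))).
    - intros u _. auto_derive; auto. ring.
    - intros u _. apply (ex_derive_continuous (K:=R_AbsRing) (V:=R_NormedModule)). auto_derive; auto. }
  rewrite (is_RInt_unique _ _ _ _ H). unfold minus, plus, opp; simpl. ring.
Qed.

Lemma gf_RInt_bound a x : a <= x -> RInt gf a x <= exp (x + 2).
Proof.
  intros Hax.
  apply Rle_trans with (RInt (fun u => exp (u + 2)) a x).
  - apply RInt_le; auto. apply gf_exRInt.
    apply (ex_RInt_continuous (V:=R_CompleteNormedModule)). intros z _.
    apply (ex_derive_continuous (K:=R_AbsRing) (V:=R_NormedModule)). auto_derive; auto.
    intros; apply gf_le_exp.
  - rewrite expshift_RInt. pose proof (exp_pos (a+2)). lra.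
Qed.

Lemma gf_RInt_pos a b : a <= b -> 0 <= RInt gf a b.
Proof. intros H. apply RInt_ge_0; auto. apply gf_exRInt. intros; apply Rlt_le, gf_pos. Qed.

Lemma gf_Chasles a b c : RInt gf a b + RInt gf b c = RInt gf a c.
Proof.
  rewrite <- (RInt_Chasles (V:=R_CompleteNormedModule) gf a b c) by apply gf_exRInt.
  reflexivity.
Qed.

Lemma gf_gen x : ex_RInt_gen gf (Rbar_locally m_infty) (at_point x).
Proof.
  set (E := fun y => exists a, a <= x /\ y = RInt gf a x).
  assert (HB : bound E).
  { exists (exp (x + 2)). intros y [a [Ha ->]]. apply gf_RInt_bound; auto. }
  assert (HE : exists y, E y) by (exists (RInt gf x x); exists x; split; [lra|auto]).
  destruct (completeness E HB HE) as [l [Hub Hlub]].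
  exists l.
  intros P [eps HP].
  assert (Ha0 : exists a0, a0 <= x /\ l - eps < RInt gf a0 x).
  { destruct (Classical_Prop.classic (exists a0, a0 <= x /\ l - eps < RInt gf a0 x)) as [H|H]; auto.
    exfalso.
    assert (l <= l - eps).
    { apply Hlub. intros y [a [Ha ->]].
      destruct (Rle_or_lt (RInt gf a x) (l - eps)); auto.
      exfalso; apply H; exists a; auto. }
    pose proof (cond_pos eps); lra. }
  destruct Ha0 as [a0 [Ha0x Ha0]].
  apply Filter_prod with (Q := fun a => a < a0) (R := fun b => b = x).
  - exists a0. auto.
  - reflexivity.
  - intros a b Ha Hb. simpl in Hb. subst b.
    exists (RInt gf a x). split.
    + simpl. apply (RInt_correct (V:=R_CompleteNormedModule)). apply gf_exRInt.
    + apply HP.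
      assert (Hle : RInt gf a x <= l) by (apply Hub; exists a; split; lra).
      assert (Hge : RInt gf a0 x <= RInt gf a x).
      { rewrite <- (gf_Chasles a a0 x). pose proof (gf_RInt_pos a a0). lra. }
      change (Rabs (RInt gf a x - l) < eps).
      rewrite Rabs_left1 by lra. lra.
Qed.

Lemma Phi_gf x : Phi x = RInt_gen gf (Rbar_locally m_infty) (at_point x).
Proof. reflexivity. Qed.

Lemma Phi_diff x y : Phi y = Phi x + RInt gf x y.
Proof.
  rewrite !Phi_gf.
  assert (Hxy : ex_RInt_gen gf (at_point x) (at_point y)).
  { exists (RInt gf x y). apply is_RInt_gen_at_point.
    apply (RInt_correct (V:=R_CompleteNormedModule)). apply gf_exRInt. }
  rewrite <- (RInt_gen_Chasles gf x (gf_gen x) Hxy).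
  rewrite RInt_gen_at_point. reflexivity. apply gf_exRInt.
Qed.
Lemma Phi_is_derive x : is_derive Phi x (gf x).
Proof.
  apply is_derive_ext with (fun y => Phi 0 + RInt gf 0 y).
  { intros t. rewrite (Phi_diff 0 t). reflexivity. }
  evar (d : R). replace (gf x) with d. apply (is_derive_plus (K:=R_AbsRing) (V:=R_NormedModule)).
  apply is_derive_const.
  apply (is_derive_RInt (V:=R_CompleteNormedModule) gf (fun y => RInt gf 0 y) 0 x).
  apply filter_forall. intros; apply (RInt_correct (V:=R_CompleteNormedModule)), gf_exRInt.
  apply gf_cont.
  unfold d. unfold plus, zero; simpl. ring.
Qed.

Lemma Phi_ex_derive x : ex_derive Phi x.
Proof. exists (gf x). apply Phi_is_derive. Qed.

Lemma gf_sym : RInt gf (-1) 0 = RInt gf 0 1.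
Proof.
  assert (H := RInt_comp_lin (V:=R_CompleteNormedModule) gf (-1) 0 0 1).
  replace (-1 * 0 + 0) with 0 in H by ring.
  replace (-1 * 1 + 0) with (-1) in H by ring.
  rewrite <- (opp_RInt_swap (V:=R_CompleteNormedModule) gf 0 (-1)) by apply gf_exRInt.
  rewrite <- H by apply gf_exRInt.
  rewrite (RInt_ext (V:=R_CompleteNormedModule) _ (fun y => opp (gf y))).
  rewrite (RInt_opp (V:=R_CompleteNormedModule)) by apply gf_exRInt.
  apply opp_opp.
  intros x _. unfold scal, opp; simpl. unfold mult; simpl.
  replace (-1 * x + 0) with (- x) by ring. rewrite gf_even. ring.
Qed.

Lemma gf_A_lt : RInt gf 0 1 < 1/2.
Proof.
  apply Rle_lt_trans with (RInt (fun _ => / sqrt (2 * PI)) 0 1).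
  - apply RInt_le. lra. apply gf_exRInt. apply ex_RInt_const.
    intros; apply gf_le.
  - rewrite RInt_const. unfold scal; simpl. unfold mult; simpl.
    pose proof sqrt2PI_gt2.
    replace (1 - 0) with 1 by ring. rewrite Rmult_1_l.
    apply Rmult_lt_reg_l with (sqrt (2 * PI)). lra.
    rewrite Rinv_r by lra. lra.
Qed.

Definition g (S : R) := rgbm_put (1/2) 1 1 (exp 1) 1 0 S - (exp 1 * exp (- (1/2) * (1 - 0)) - S).

Lemma g_ex_derive : ex_derive g 1.
Proof.
  unfold g, rgbm_put, Rpower. auto_derive.
  pose proof (exp_pos 1) as He; pose proof (Rinv_0_lt_compat _ He) as Hi.
  repeat split; try apply Phi_ex_derive; rewrite ?Rmult_1_r, ?Rmult_1_l; lra.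
Qed.

Lemma g1_neg : g 1 < 0.
Proof.
  unfold g, rgbm_put. cbv beta zeta.
  replace (1 - 0) with 1 by ring. rewrite sqrt_1.
  replace (2 * (1 / 2) / 1 ^ 2) with 1 by field.
  pose proof (exp_pos 1) as He.
  replace (1 / exp 1) with (exp (- (1))) by (rewrite exp_Ropp; field; lra).
  replace (1 ^ 2 / (exp 1 * 1)) with (exp (- (1))) by (rewrite exp_Ropp; field; lra).
  replace (1 / 1) with 1 by field.
  replace (exp 1 / 1) with (exp 1) by field.
  rewrite ln_exp, ln_1.
  unfold Rpower. rewrite ln_1. replace (1 - 1) with 0 by ring.
  rewrite !Rmult_0_r, !Rmult_0_l, exp_0.
  rewrite <- exp_plus. replace (1 + - (1/2) * 1) with (1/2) by field.
  set (A := RInt gf 0 1).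
  set (p0 := Phi 0). set (p1 := Phi 1). set (pm := Phi (-1)).
  assert (H1 : p1 = p0 + A) by (unfold p1, p0, A; apply Phi_diff).
  assert (H0 : p0 = pm + A).
  { unfold p0, pm, A. rewrite (Phi_diff (-1) 0). f_equal. apply gf_sym. }
  assert (HA : A < 1/2) by apply gf_A_lt.
  assert (HE : 1 < exp (1/2)) by (pose proof (exp_increasing 0 (1/2)) as Hx; rewrite exp_0 in Hx; apply Hx; lra).
  repeat match goal with
  | |- context [Phi ?a] =>
    first [ replace (Phi a) with p1 by (unfold p1; f_equal; field)
          | replace (Phi a) with p0 by (unfold p0; f_equal; field)
          | replace (Phi a) with pm by (unfold pm; f_equal; field) ]
  end.
  rewrite H1, H0.
  assert (0 < (exp (1/2) - 1) * (1 - 2 * A)) by (apply Rmult_lt_0_compat; lra).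
  nra.
Qed.

Theorem proposition3p4 :
  exists r sigma b K T t : R,
    0 < r /\ 0 < sigma /\ 0 < b /\ b <= K /\ 0 <= t < T /\
    exists delta : R, 0 < delta /\
      forall S : R, b <= S < b + delta ->
        rgbm_put r sigma b K T t S < K * exp (- r * (T - t)) - S.
Proof.
  exists (1/2), 1, 1, (exp 1), 1, 0.
  assert (Hc : continuous g 1).
  { apply (ex_derive_continuous (K:=R_AbsRing) (V:=R_NormedModule)). apply g_ex_derive. }
  pose proof g1_neg as Hg.
  assert (Hloc : locally (g 1) (fun y => y < 0)).
  { assert (Hp : 0 < - g 1) by lra.
    exists (mkposreal _ Hp). intros y Hy. change (Rabs (y - g 1) < - g 1) in Hy.
    apply Rabs_def2 in Hy. simpl in Hy. lra. }
  destruct (Hc _ Hloc) as [eps Heps].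
  pose proof (exp_pos 1) as He.
  assert (HE1 : 1 <= exp 1).
  { pose proof (exp_increasing 0 1) as Hx. rewrite exp_0 in Hx. left; apply Hx; lra. }
  repeat split; try lra.
  exists eps. split. apply cond_pos.
  intros S HS.
  assert (HgS : g S < 0).
  { apply Heps. change (Rabs (S - 1) < eps). apply Rabs_def1; lra. }
  unfold g in HgS. lra.
Qed.
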